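(* Let $X$ be a real Banach space with a normalized Schauder basis $\mathcal B=(e_n)_{n=1}^\infty$ with biorthogonal functionals $(e_n^* )$, let $\mathcal E=(\varepsilon_n)_{n=1}^\infty$ be a sequence of nonnegative numbers, and let $K=K_{\mathcal B,\mathcal E}$. Then: (1) $r^{\rm ext}(K)\le r^{\rm unc}(K)$; (2) if $r^{\rm ext}(K)<\infty$ then $r^{\rm ext}(K)=\sup_{x\in K}\|x\|$; (3) if $r^{\rm unc}(K)<\infty$ then $r^{\rm ext}(K)=r^{\rm unc}(K)=\sup_{x\in K}\|x\|$.
   Context: The brick is $K_{\mathcal B,\mathcal E}=\{x\in X:\ |e_n^*(x)|\le\varepsilon_n \text{ for all } n\}$. A point $x_0\in A$ is an extreme point of $A$ if for every nonzero $x\in X$ there is $\lambda\in[-1,1]$ with $x_0+\lambda x\notin A$ (for a brick, these are exactly the $x_0$ with $|e_n^*(x_0)|=\varepsilon_n$ for all $n$). The extreme radius $r^{\rm ext}(K)$ is the supremum of $\|x_0\|$ over extreme points $x_0$ of $K$ if an extreme point exists, and $\infty$ otherwise. The unconditional radius is $r^{\rm unc}(K)=\sup_{\theta_n=\pm1}\|\sum_{n=1}^\infty\theta_n\varepsilon_ne_n\|$, where the norm of a divergent series is $\infty$. *)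

(* Defs.v *)
From HB Require Import structures.
From mathcomp Require Import all_boot all_order all_algebra.
From mathcomp Require Import all_classical all_reals all_analysis.
Set Implicit Arguments. Unset Strict Implicit. Unset Printing Implicit Defensive.
Import Order.TTheory GRing.Theory Num.Theory.
Import numFieldNormedType.Exports.
Local Open Scope classical_set_scope.
Local Open Scope ring_scope.

Definition schauder_basis (R : realType) (X : normedModType R)
    (e : nat -> X) (estar : nat -> X -> R) : Prop :=
  (forall x : X, series (fun n => estar n x *: e n) @ \oo --> x) /\
  (forall (a : nat -> R) (x : X),
      series (fun n => a n *: e n) @ \oo --> x -> forall n, a n = estar n x).

Definition normalized (R : realType) (X : normedModType R) (e : nat -> X) :=
  forall n, `|e n| = 1.

Definition brick (R : realType) (X : normedModType R)
    (estar : nat -> X -> R) (eps : nat -> R) : set X :=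
  [set x | forall n, `|estar n x| <= eps n].

Definition extreme_point (R : realType) (X : normedModType R)
    (A : set X) (x0 : X) : Prop :=
  A x0 /\ forall x : X, x != 0 ->
    exists lam : R, -1 <= lam <= 1 /\ ~ A (x0 + lam *: x).

Definition series_norm (R : realType) (X : normedModType R) (u : nat -> X)
  : \bar R :=
  if pselect (cvgn (series u)) then (`|limn (series u)|)%:E else +oo%E.

Definition ext_radius (R : realType) (X : normedModType R) (A : set X)
  : \bar R :=
  if pselect (exists x0, extreme_point A x0)
  then ereal_sup [set (`|x0|)%:E | x0 in extreme_point A]
  else +oo%E.

Definition unc_radius (R : realType) (X : normedModType R)
    (e : nat -> X) (eps : nat -> R) : \bar R :=
  ereal_sup [set series_norm (fun n => theta n * eps n *: e n)
            | theta in [set theta : nat -> R | forall n, theta n = 1 \/ theta n = -1]].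

Definition sup_norm (R : realType) (X : normedModType R) (A : set X) : \bar R :=
  ereal_sup [set (`|x|)%:E | x in A].

(* Main.v *)
Require Import Defs.
From HB Require Import structures.
From mathcomp Require Import all_boot all_order all_algebra.
From mathcomp Require Import all_classical all_reals all_analysis.
Import Order.TTheory GRing.Theory Num.Theory.
Import numFieldNormedType.Exports.
Local Open Scope classical_set_scope.
Local Open Scope ring_scope.

From mathcomp Require Import ring lra.

Section Basics.
Variables (R : realType) (X : normedModType R) (e : nat -> X) (estar : nat -> X -> R).
Hypothesis hB : schauder_basis e estar.

Lemma seriesE (u : nat -> X) N : series u N = \sum_(0 <= k < N) u k.
Proof. by []. Qed.

Lemma estar_lin a x y n : estar n (a *: x + y) = a * estar n x + estar n y.
Proof.
symmetry; apply: (hB.2 (fun n => a * estar n x + estar n y)).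
have -> : series (fun n => (a * estar n x + estar n y) *: e n) =
  (fun N => a *: series (fun n => estar n x *: e n) N + series (fun n => estar n y *: e n) N).
  apply: funext => N; rewrite !seriesE scaler_sumr -big_split /=.
  by apply: eq_bigr => i _; rewrite scalerDl scalerA.
apply: cvgD; last exact: hB.1.
apply: cvgZ; [exact: cvg_cst | exact: hB.1].
Qed.

Lemma sum_delta k N : \sum_(0 <= m < N) (m == k)%:R *: e m = if (k < N)%N then e k else 0.
Proof.
elim: N => [|N IH]; first by rewrite big_geq.
rewrite big_nat_recr //= IH.
case: (ltngtP k N) => hk.
- by rewrite (ltn_trans hk (ltnSn N)) scale0r addr0.
- by rewrite ltnNge hk /= scale0r addr0.
- by rewrite hk ltnSn scale1r add0r.
Qed.

Lemma estar_e n k : estar n (e k) = (n == k)%:R.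
Proof.
symmetry; apply: (hB.2 (fun m => (m == k)%:R)).
apply: cvg_trans (near_eq_cvg _) (cvg_cst (e k)).
near=> N; rewrite seriesE sum_delta.
suff -> : (k < N)%N by [].
near: N; exact: nbhs_infty_gt.
Unshelve. all: by end_near.
Qed.

Lemma estar_add_e x lam k n :
  estar n (x + lam *: e k) = estar n x + lam * (n == k)%:R.
Proof. by rewrite addrC estar_lin estar_e addrC. Qed.

Lemma estar_eq0 x : (forall n, estar n x = 0) -> x = 0.
Proof.
move=> h.
have hs : series (fun n => estar n x *: e n) = fun _ => 0.
  apply: funext => N; rewrite seriesE big1 // => i _.
  by rewrite h scale0r.
have := hB.1 x; rewrite hs => hx.
exact: (cvg_unique (@norm_hausdorff _ _) hx (cvg_cst 0)).
Qed.


Variable eps : nat -> R.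
Hypothesis hnorm : normalized e.
Hypothesis heps : forall n, 0 <= eps n.

Definition E0 x := forall n, `|estar n x| = eps n.

Lemma estar_addZ x0 lam x m : estar m (x0 + lam *: x) = estar m x0 + lam * estar m x.
Proof. by rewrite addrC estar_lin addrC. Qed.

Lemma estar0 m : estar m 0 = 0.
Proof.
have h := estar_lin 1 0 0 m.
rewrite scale1r addr0 mul1r in h.
have : estar m 0 + estar m 0 = estar m 0 + 0 by rewrite addr0 -h.
by move/addrI.
Qed.

Lemma E0_ext x0 : E0 x0 -> extreme_point (brick estar eps) x0.
Proof.
move=> h; split; first by move=> n; rewrite h.
move=> x xn0.
have [m hm] : exists m, estar m x != 0.
  apply: contrapT => hn; move/eqP: xn0; apply; apply: estar_eq0 => n.
  by apply/eqP/negPn/negP => hne; apply: hn; exists n.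
case: (pselect (brick estar eps (x0 + 1 *: x))) => h1; last first.
  by exists 1; split => //; apply/andP; split; lra.
case: (pselect (brick estar eps (x0 + (-1) *: x))) => h2; last first.
  by exists (-1); split => //; apply/andP; split; lra.
exfalso; move: (h1 m) (h2 m); rewrite !estar_addZ -(h m) !mul1r !mulN1r.
set c := estar m x0; set y := estar m x.
rewrite !ler_norml => /andP[a1 a2] /andP[a3 a4].
have hE : `|c| ^+ 2 = c ^+ 2 by rewrite real_normK // num_real.
have hy : 0 < y ^+ 2 by rewrite exprn_even_gt0.
have hc : 0 <= `|c| by [].
nra.
Qed.

Lemma ext_E0 x0 : extreme_point (brick estar eps) x0 -> E0 x0.
Proof.
move=> [hK hx] n; apply/eqP; rewrite eq_le hK /=.
rewrite leNgt; apply/negP => hlt.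
set d := eps n - `|estar n x0|.
have dpos : 0 < d by rewrite subr_gt0.
have : d *: e n != 0.
  by rewrite -normr_eq0 normrZ hnorm mulr1 gtr0_norm // gt_eqF.
case/hx => lam [/andP[l1 l2]] []; move=> m.
rewrite estar_addZ -[d *: e n]addr0 estar_lin estar_e.
rewrite estar0 addr0.
case: (eqVneq m n) => [->|hmn]; last by rewrite mulr0 mulr0 addr0.
rewrite mulr1 (le_trans (ler_normD _ _)) //.
rewrite normrM.
have : `|lam| * `|d| <= d.
  by rewrite (gtr0_norm dpos) ger_pMl // ler_norml l1 l2.
rewrite /d; lra.
Qed.

Lemma convex_line (w v : X) (u u' s M : R) :
  `|w + u *: v| <= M -> `|w + u' *: v| <= M -> u' <= s <= u ->
  `|w + s *: v| <= M.
Proof.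
move=> h1 h2 /andP[s1 s2].
have [eu|neu] := eqVneq u u'.
  by have -> : s = u by apply/eqP; rewrite eq_le s2 eu s1.
have du : 0 < u - u' by rewrite subr_gt0 lt_neqAle eq_sym neu (le_trans s1 s2).
set t := (s - u') / (u - u').
have t0 : 0 <= t by apply: divr_ge0; [rewrite subr_ge0 | exact: ltW].
have t1 : t <= 1 by rewrite /t ler_pdivrMr // mul1r lerD2r.
have hs : s = t * u + (1 - t) * u'.
  rewrite /t; field; by rewrite subr_eq0.
clearbody t.
have -> : w + s *: v = t *: (w + u *: v) + (1 - t) *: (w + u' *: v).
  rewrite hs !scalerDr !scalerA addrACA -!scalerDl.
  by rewrite [t + _]addrC subrK scale1r.
rewrite (le_trans (ler_normD _ _)) // !normrZ (ger0_norm t0) ger0_norm ?subr_ge0 //.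
have : t * `|w + u *: v| <= t * M by rewrite ler_wpM2l.
have : (1 - t) * `|w + u' *: v| <= (1 - t) * M by rewrite ler_wpM2l // subr_ge0.
lra.
Qed.

Variable M : R.
Hypothesis hM : forall y, E0 y -> `|y| <= M.

Lemma z_bound k : forall x', E0 x' -> forall b, (forall n, `|b n| <= eps n) ->
  `|x' + \sum_(0 <= n < k) (b n - estar n x') *: e n| <= M.
Proof.
elim: k => [|k IH] x' hx' b hb.
  by rewrite big_geq // addr0 hM.
rewrite big_nat_recr //= addrA.
set c := estar k x'.
set xp := x' + (eps k - c) *: e k.
set xm := x' + (- eps k - c) *: e k.
have hcoord : forall (lam : R) n, (n < k)%N -> estar n (x' + lam *: e k) = estar n x'.
  by move=> lam n hn; rewrite estar_addZ estar_e (ltn_eqF hn) mulr0 addr0.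
have Ep : E0 xp.
  move=> n; rewrite estar_addZ estar_e.
  case: (eqVneq n k) => [->|hn]; last by rewrite mulr0 addr0 hx'.
  by rewrite mulr1 /c addrC subrK ger0_norm.
have Em : E0 xm.
  move=> n; rewrite estar_addZ estar_e.
  case: (eqVneq n k) => [->|hn]; last by rewrite mulr0 addr0 hx'.
  by rewrite mulr1 /c addrC subrK normrN ger0_norm.
have Sp := IH xp Ep b hb.
have Sm := IH xm Em b hb.
have eqS : forall (lam : R), \sum_(0 <= n < k) (b n - estar n (x' + lam *: e k)) *: e n
    = \sum_(0 <= n < k) (b n - estar n x') *: e n.
  move=> lam; apply: eq_big_nat => n /andP[_ hn]; by rewrite hcoord.
rewrite /xp eqS addrAC in Sp.
rewrite /xm eqS addrAC in Sm.
apply: (convex_line _ _ _ _ _ _ Sp Sm).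
have := hb k; rewrite ler_norml => /andP[h1 h2].
apply/andP; split; lra.
Qed.


Lemma K_bound x x0 : brick estar eps x -> E0 x0 -> `|x| <= M.
Proof.
move=> hx hx0.
pose z N := x0 + \sum_(0 <= n < N) (estar n x - estar n x0) *: e n.
have hz : z @ \oo --> x.
  have -> : z = ((fun=> x0) - series (fun n => estar n x0 *: e n))
                  + series (fun n => estar n x *: e n).
    apply: funext => N; rewrite /z /=.
    rewrite !fctE.
    rewrite !seriesE -addrA; congr (_ + _).
    by rewrite addrC -sumrB; apply: eq_bigr => i _; rewrite scalerBl.
  suff : ((fun=> x0) - series (fun n => estar n x0 *: e n))
                  + series (fun n => estar n x *: e n) @ \oo --> x0 - x0 + x.
    by rewrite subrr add0r.
  apply: cvgD; last exact: hB.1.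
  apply: cvgB; [exact: cvg_cst | exact: hB.1].
have := closed_cvg (closed_ball_ Num.norm 0 M) (@closed_closed_ball_ _ _ 0 M) _ _ hz.
rewrite /closed_ball_ /= sub0r normrN; apply.
apply: nearW => N; rewrite /closed_ball_ /= sub0r normrN.
by apply: z_bound.
Qed.

End Basics.
Arguments E0 {R X} estar eps x.
Arguments ext_E0 {R X e estar} hB {eps} hnorm {x0}.
Arguments E0_ext {R X e estar} hB {eps x0}.
Arguments K_bound {R X e estar} hB {eps} heps {M} hM {x x0}.

Section Main.
Variables (R : realType) (X : normedModType R) (e : nat -> X) (estar : nat -> X -> R).
Hypothesis hB : schauder_basis e estar.
Variable eps : nat -> R.
Hypothesis hnorm : normalized e.
Hypothesis heps : forall n, 0 <= eps n.

Lemma series_norm_cvg (a : nat -> R) y :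
  series (fun n => a n *: e n) @ \oo --> y ->
  series_norm (fun n => a n *: e n) = (`|y|)%:E.
Proof.
move=> h; rewrite /series_norm; destruct pselect as [hc|hn]; rewrite /=.
  by rewrite (cvg_lim (@norm_hausdorff _ _) h).
by exfalso; apply: hn; exact: (cvgP y h).
Qed.

Lemma sign_series_E0 (th : nat -> R) y :
  (forall n, th n = 1 \/ th n = -1) ->
  series (fun n => th n * eps n *: e n) @ \oo --> y -> E0 estar eps y.
Proof.
move=> hth h n.
rewrite -(hB.2 (fun n => th n * eps n) y h n) normrM.
by case: (hth n) => ->; rewrite ?normrN normr1 mul1r ger0_norm.
Qed.

Lemma part1 : (ext_radius (brick estar eps) <= unc_radius e eps)%E.
Proof.
rewrite /ext_radius; case: pselect => [[x0 hx0]|hno].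
  apply: ge_ereal_sup => _ [y hy <-].
  have hE := ext_E0 hB hnorm hy.
  pose th n : R := if 0 <= estar n y then 1 else -1.
  have hth : forall n, th n * eps n = estar n y.
    move=> n; rewrite /th -(hE n); case: ifP => h.
      by rewrite mul1r ger0_norm.
    by rewrite mulN1r ltr0_norm ?opprK // ltNge h.
  apply: ereal_sup_ubound; exists th.
    by move=> n; rewrite /th; case: ifP; [left|right].
  have -> : (fun n => th n * eps n *: e n) = (fun n => estar n y *: e n).
    by apply: funext => n; rewrite hth.
  exact: series_norm_cvg (hB.1 y).
have -> : +oo%E = series_norm (fun n => (fun=> 1 : R) n * eps n *: e n).
  rewrite /series_norm; case: pselect => // hc; exfalso; apply: hno.
  exists (limn (series (fun n => (fun=> 1 : R) n * eps n *: e n))).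
  apply: (E0_ext hB) => //; apply: (sign_series_E0 (fun=> 1)) => //.
  by move=> n; left.
apply: ereal_sup_ubound; exists (fun=> 1) => //.
by move=> n; left.
Qed.

Lemma part2 : (ext_radius (brick estar eps) < +oo)%E ->
  ext_radius (brick estar eps) = sup_norm (brick estar eps).
Proof.
rewrite /ext_radius; destruct pselect as [hex|hno]; last by rewrite /= ltxx.
have [x0 hx0] := hex; rewrite /=.
set S := ereal_sup _ => hlt.
have hx0le : ((`|x0|)%:E <= S)%E by apply: ereal_sup_ubound; exists x0.
have Sfin : S \is a fin_num.
  by rewrite ge0_fin_numE // (le_trans _ hx0le).
have hM : forall y, E0 estar eps y -> `|y| <= fine S.
  move=> y hy; have : ((`|y|)%:E <= S)%E.
    by apply: ereal_sup_ubound; exists y => //; apply: (E0_ext hB).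
  by rewrite -(fineK Sfin) lee_fin.
apply: le_anti; apply/andP; split.
  apply: ereal_sup_le => _ [y hy <-]; exists y => //; exact: hy.1.
apply: ge_ereal_sup => _ [x hx <-]; rewrite -(fineK Sfin) lee_fin.
exact: (K_bound hB heps hM hx (ext_E0 hB hnorm hx0)).
Qed.

Lemma part3 : (unc_radius e eps < +oo)%E ->
  ext_radius (brick estar eps) = unc_radius e eps /\
  unc_radius e eps = sup_norm (brick estar eps).
Proof.
move=> hlt.
have hcv : forall th : nat -> R, (forall n, th n = 1 \/ th n = -1) ->
    exists y : X, (series (fun n => th n * eps n *: e n) @ \oo --> y).
  move=> th hth.
  have : (series_norm (fun n => th n * eps n *: e n) <= unc_radius e eps)%E.
    by apply: ereal_sup_ubound; exists th.
  rewrite /series_norm; case: pselect => [hc _|hn].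
    by exists (limn (series (fun n => th n * eps n *: e n))).
  by rewrite leye_eq => /eqP h; rewrite h ltxx in hlt.
have heq : ext_radius (brick estar eps) = unc_radius e eps.
  apply: le_anti; rewrite part1 /=.
  rewrite /ext_radius; case: pselect => [hE|hno].
    apply: ge_ereal_sup => _ [th hth <-].
    have [y hy] := hcv th hth.
    apply: ereal_sup_ubound; exists y.
      by apply: (E0_ext hB) => //; exact: sign_series_E0 hy.
    by rewrite (series_norm_cvg (fun n => th n * eps n) y hy).
  by rewrite leey.
split => //; rewrite -heq; apply: part2; by rewrite heq.
Qed.

End Main.

Theorem theorem3p2 (R : realType) (X : completeNormedModType R)
    (e : nat -> X) (estar : nat -> X -> R) (eps : nat -> R)
    (hB : schauder_basis e estar) (hnorm : normalized e)
    (heps : forall n, 0 <= eps n) :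
  let K := brick estar eps in
  [/\ (ext_radius K <= unc_radius e eps)%E,
      (ext_radius K < +oo)%E -> ext_radius K = sup_norm K &
      (unc_radius e eps < +oo)%E ->
        ext_radius K = unc_radius e eps /\ unc_radius e eps = sup_norm K].
Proof.
move=> K; rewrite /K; split.
- exact: (part1 _ _ _ _ hB _ hnorm heps).
- exact: (part2 _ _ _ _ hB _ hnorm heps).
- exact: (part3 _ _ _ _ hB _ hnorm heps).
Qed.
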